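(* Let $M$ be a matroid, and suppose that $M\cong M_1\mathbin{\Box}\cdots\mathbin{\Box} M_k$ and $M\cong N_1\mathbin{\Box}\cdots\mathbin{\Box} N_r$, where all the matroids $M_i$ and $N_j$ are irreducible (and the factors in each product are taken on pairwise disjoint ground sets). Then $k=r$ and $M_i\cong N_i$ for $1\leq i\leq k$.
   Context: For a matroid $M$ on a finite set $S$ write $\rho_M$ for its rank function, $\rho(M)=\rho_M(S)$, $\nu_M(A)=|A|-\rho_M(A)$ for its nullity function, and $\lambda_M(A)=\rho(M)-\rho_M(A)$ for its rank-lack function. For matroids $M$ on $S$ and $N$ on $T$ with $S\cap T=\emptyset$, the free product $M\mathbin{\Box} N$ is the matroid on $S\cup T$ whose independent sets are those $A\subseteq S\cup T$ such that $A\cap S$ is independent in $M$ and $\lambda_M(A\cap S)\geq \nu_N(A\cap T)$. Free product is associative, so iterated free products need no parentheses. A matroid $M$ is irreducible if it is nonempty (has nonempty ground set) and every factorization of $M$ as a free product of matroids contains $M$ itself as a factor; the empty matroid is not irreducible. *)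

(* Defs.v *)
From mathcomp Require Import all_boot.
From Stdlib Require List.
Set Implicit Arguments. Unset Strict Implicit. Unset Printing Implicit Defensive.

(* A set system on a finite ground type: the ground set is the whole type. *)
Record matroid := Matroid { mtype : finType; mindep : {set mtype} -> bool }.
Arguments mindep : clear implicits.

Definition matroid_axioms (M : matroid) : Prop :=
  [/\ mindep M set0,
      (forall A B : {set mtype M}, A \subset B -> mindep M B -> mindep M A) &
      (forall A B : {set mtype M}, mindep M A -> mindep M B -> #|A| < #|B| ->
         exists2 x, x \in B :\: A & mindep M (x |: A))].

Definition mrank (M : matroid) (A : {set mtype M}) : nat :=
  \max_(I : {set mtype M} | (I \subset A) && mindep M I) #|I|.

Definition mrankM (M : matroid) : nat := mrank [set: mtype M].

Definition mnullity (M : matroid) (A : {set mtype M}) : nat := #|A| - mrank A.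

Definition mlack (M : matroid) (A : {set mtype M}) : nat := mrankM M - mrank A.

Definition freeprod (M N : matroid) : matroid :=
  @Matroid (mtype M + mtype N)%type
    (fun A => let AS := [set x | inl x \in A] in
              let AT := [set y | inr y \in A] in
              mindep M AS && (mnullity AT <= mlack AS)).

Definition empty_matroid : matroid := @Matroid void (fun _ => true).

Fixpoint bigfp (s : seq matroid) : matroid :=
  match s with
  | [::] => empty_matroid
  | [:: M] => M
  | M :: s' => freeprod M (bigfp s')
  end.

Definition miso (M N : matroid) : Prop :=
  exists f : mtype M -> mtype N,
    bijective f /\ forall A : {set mtype M}, mindep N (f @: A) = mindep M A.

Definition irreducible (M : matroid) : Prop :=
  0 < #|mtype M| /\
  forall s : seq matroid, (forall N, List.In N s -> matroid_axioms N) ->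
    miso M (bigfp s) ->
    exists s1 N s2, s = s1 ++ N :: s2 /\ miso N M.

(* Main.v *)
Require Import Defs.
From mathcomp Require Import all_boot.
From Stdlib Require List.
From mathcomp Require Import zify.
Set Implicit Arguments. Unset Strict Implicit. Unset Printing Implicit Defensive.

Section Rank.
Variable M : matroid.
Implicit Types A B I : {set mtype M}.

Lemma mrank_ub A I : I \subset A -> mindep M I -> #|I| <= mrank A.
Proof.
move=> sIA iI; rewrite /mrank.
by apply: (@leq_bigmax_cond _ (fun J : {set mtype M} => (J \subset A) && mindep M J) (fun J => #|J|) I); rewrite sIA iI.
Qed.

Lemma mrank_le A : mrank A <= #|A|.
Proof. by apply/bigmax_leqP => I /andP[sIA _]; exact: subset_leq_card. Qed.

Lemma mrank_mono A B : A \subset B -> mrank A <= mrank B.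
Proof.
move=> sAB; apply/bigmax_leqP => I /andP[sIA iI]; apply: mrank_ub iI.
exact: subset_trans sAB.
Qed.

Lemma mrank_witness A : mindep M set0 ->
  exists I, [/\ I \subset A, mindep M I & #|I| = mrank A].
Proof.
move=> h0.
have P0 : (fun J : {set mtype M} => (J \subset A) && mindep M J) set0 by rewrite sub0set h0.
case: (@arg_maxnP _ set0 (fun J : {set mtype M} => (J \subset A) && mindep M J) (fun J => #|J|) P0).
move=> I /andP[sIA iI] maxI; exists I; split => //.
apply/eqP; rewrite eqn_leq (mrank_ub sIA iI) /=.
by apply/bigmax_leqP => J HJ; apply: maxI.
Qed.

Lemma mrank_indep I : mindep M I -> mrank I = #|I|.
Proof. by move=> iI; apply/eqP; rewrite eqn_leq mrank_le mrank_ub. Qed.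

Lemma indep_rank I : mindep M set0 -> mrank I = #|I| -> mindep M I.
Proof.
move=> h0 hr; case: (mrank_witness I h0) => J [sJI iJ cJ].
have /eqP <- // : J == I by rewrite eqEcard sJI cJ hr leqnn.
Qed.

Lemma indepE I : mindep M set0 -> mindep M I = (mrank I == #|I|).
Proof.
move=> h0; apply/idP/eqP; [exact: mrank_indep | exact: indep_rank].
Qed.

Lemma mrank0 : mrank (set0 : {set mtype M}) = 0.
Proof. by apply/eqP; rewrite -leqn0 -(cards0 (mtype M)) mrank_le. Qed.

Hypothesis hdown : forall A B, A \subset B -> mindep M B -> mindep M A.

Lemma mrank_subadd A B : mrank (A :|: B) <= mrank A + #|B|.
Proof.
apply/bigmax_leqP => I /andP[sI iI].
rewrite -(cardsID A I).
apply: leq_add.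
  by apply: mrank_ub; [exact: subsetIr | apply: hdown iI; exact: subsetIl].
apply: subset_leq_card; apply/subsetP => x; rewrite !inE => /andP[xA xI].
by move/subsetP: sI => /(_ x xI); rewrite inE (negbTE xA).
Qed.

Lemma mrank_leD A B : mrank A <= mrank B + #|A :\: B|.
Proof.
apply: leq_trans (mrank_subadd B (A :\: B)).
by apply: mrank_mono; apply/subsetP => x; rewrite !inE; case: (x \in B).
Qed.

End Rank.

Ltac bdec := repeat match goal with |- context [?x \in ?A] => case: (x \in A) end.
Ltac setdec := apply/setP => ?; rewrite !inE; bdec.
Ltac subdec := apply/subsetP => ?; rewrite !inE; bdec.

Definition msplit (M : matroid) (K : {set mtype M}) :=
  forall A, mrank A = minn (mrank (A :&: K) + #|A :\: K|) (mrank (A :|: K)).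

Section Split.
Variable M : matroid.
Hypothesis hdown : forall A B : {set mtype M}, A \subset B -> mindep M B -> mindep M A.
Implicit Types A B K S : {set mtype M}.

Lemma split_le A K : mrank A <= minn (mrank (A :&: K) + #|A :\: K|) (mrank (A :|: K)).
Proof.
rewrite leq_min; apply/andP; split; last by apply: mrank_mono; exact: subsetUl.
have -> : A :\: K = A :\: (A :&: K) by setdec.
exact: mrank_leD.
Qed.

Lemma msplitP K : (forall A, minn (mrank (A :&: K) + #|A :\: K|) (mrank (A :|: K)) <= mrank A) -> msplit K.
Proof. by move=> h A; apply/eqP; rewrite eqn_leq split_le h. Qed.

Lemma split_inter S S' : msplit S -> msplit S' -> msplit (S :&: S').
Proof.
move=> hS hS'; apply: msplitP => A.
have e1 := hS A; have e2 := hS' (A :&: S).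
have c1 : #|A :\: (S :&: S')| = #|(A :&: S) :\: S'| + #|A :\: S|.
  rewrite -(cardsID S (A :\: (S :&: S'))).
  have -> : (A :\: (S :&: S')) :&: S = (A :&: S) :\: S' by setdec.
  have -> : (A :\: (S :&: S')) :\: S = A :\: S by setdec.
  done.
have r1 : (A :&: S) :&: S' = A :&: (S :&: S') by setdec.
have m1 : mrank (A :|: (S :&: S')) <= mrank (A :|: S) by apply: mrank_mono; subdec.
have m2 : mrank (A :|: (S :&: S')) <= mrank ((A :&: S) :|: S') + #|A :\: S|.
  apply: leq_trans (mrank_leD hdown _ ((A :&: S) :|: S')) _; rewrite leq_add2l.
  by apply: subset_leq_card; subdec.
rewrite r1 in e2; lia.
Qed.

Lemma split_union S S' : msplit S -> msplit S' -> msplit (S :|: S').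
Proof.
move=> hS hS'; apply: msplitP => A.
have e1 := hS A; have e2 := hS' (A :|: S).
have i1 : mrank (A :&: (S :|: S')) + #|A :\: (S :|: S')| <= mrank (A :&: S) + #|A :\: S|.
  apply: leq_trans (leq_add (mrank_leD hdown _ (A :&: S)) (leqnn _)) _.
  rewrite -addnA leq_add2l.
  rewrite -(cardsID S' (A :\: S)).
  have -> : (A :\: S) :&: S' = (A :&: (S :|: S')) :\: (A :&: S) by setdec.
  have -> : (A :\: S) :\: S' = A :\: (S :|: S') by setdec.
  done.
have i2 : mrank (A :&: (S :|: S')) + #|A :\: (S :|: S')| <=
          mrank ((A :|: S) :&: S') + #|(A :|: S) :\: S'|.
  apply: leq_trans (leq_add (mrank_leD hdown _ ((A :|: S) :&: S')) (leqnn _)) _.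
  rewrite -addnA leq_add2l.
  rewrite -(cardsID (A :\: (S :|: S')) ((A :|: S) :\: S')).
  have -> : ((A :|: S) :\: S') :&: (A :\: (S :|: S')) = A :\: (S :|: S') by setdec.
  rewrite addnC leq_add2l.
  by apply: subset_leq_card; subdec.
have r1 : A :|: S :|: S' = A :|: (S :|: S') by rewrite setUA.
rewrite r1 in e2; lia.
Qed.

End Split.

Section Sum.
Variables T1 T2 : finType.

Lemma inl_in_inl (B : {set T1}) x : (@inl T1 T2 x \in inl @: B) = (x \in B).
Proof. by rewrite mem_imset //; move=> ? ? []. Qed.
Lemma inr_in_inr (B : {set T2}) x : (@inr T1 T2 x \in inr @: B) = (x \in B).
Proof. by rewrite mem_imset //; move=> ? ? []. Qed.
Lemma inr_in_inl (B : {set T1}) y : (@inr T1 T2 y \in inl @: B) = false.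
Proof. by apply/imsetP => -[? _]. Qed.
Lemma inl_in_inr (B : {set T2}) y : (@inl T1 T2 y \in inr @: B) = false.
Proof. by apply/imsetP => -[? _]. Qed.

Definition sumE := (inl_in_inl, inr_in_inr, inr_in_inl, inl_in_inr).

Lemma sum_decomp (A : {set T1 + T2}) :
  A = inl @: [set x | inl x \in A] :|: inr @: [set y | inr y \in A].
Proof. by apply/setP => -[x|y]; rewrite !inE !sumE inE ?orbF. Qed.

Lemma card_sumset (A : {set T1 + T2}) :
  #|A| = #|[set x | inl x \in A]| + #|[set y | inr y \in A]|.
Proof.
rewrite {1}(sum_decomp A) cardsU !card_imset; try by move=> ? ? [].
have -> : inl @: [set x | inl x \in A] :&: inr @: [set y | inr y \in A] = set0.
  by apply/setP => -[x|y]; rewrite !inE !sumE ?andbF.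
by rewrite cards0 subn0.
Qed.

Lemma card_inlU (B : {set T1}) (C : {set T2}) :
  #|inl @: B :|: inr @: C| = #|B| + #|C|.
Proof.
rewrite card_sumset.
have -> : [set x | @inl T1 T2 x \in inl @: B :|: inr @: C] = B by apply/setP => x; rewrite !inE !sumE ?orbF.
by have -> : [set x | @inr T1 T2 x \in inl @: B :|: inr @: C] = C by apply/setP => x; rewrite !inE !sumE ?orbF.
Qed.
End Sum.

Lemma subset_card_exists (T : finType) (A : {set T}) n :
  n <= #|A| -> exists2 B : {set T}, B \subset A & #|B| = n.
Proof.
elim: n => [|n IH] h; first by exists set0; rewrite ?sub0set ?cards0.
have [B sBA cB] := IH (ltnW h).
have : A :\: B != set0.
  by rewrite -card_gt0 cardsD (setIidPr sBA); lia.
case/set0Pn => x; rewrite inE => /andP[xB xA].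
exists (x |: B); first by rewrite subUset sub1set xA sBA.
by rewrite cardsU1 xB cB.
Qed.

Lemma mrank_inj (N Z : matroid) (h : mtype N -> mtype Z) :
  injective h -> (forall A, mindep N A = mindep Z (h @: A)) ->
  forall A, mrank A = mrank (h @: A).
Proof.
move=> hinj hind A; apply/eqP; rewrite eqn_leq; apply/andP; split.
  apply/bigmax_leqP => I /andP[sIA iI]; rewrite -(card_imset _ hinj).
  by apply: mrank_ub; [exact: imsetS | rewrite -hind].
apply/bigmax_leqP => J /andP[sJ iJ].
have eJ : h @: [set x | h x \in J] = J.
  apply/setP => y; apply/imsetP/idP => [[x]|yJ]; first by rewrite inE => hx ->.
  move/subsetP: sJ => /(_ y yJ) /imsetP [x xA ey]; exists x => //; by rewrite inE -ey.
rewrite -eJ (card_imset _ hinj); apply: mrank_ub; last by rewrite hind eJ.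
apply/subsetP => x; rewrite inE => hx; move/subsetP: sJ => /(_ _ hx).
by rewrite mem_imset.
Qed.

Section FP.
Variables P Q : matroid.

Lemma fpE (A : {set mtype (freeprod P Q)}) :
  mindep (freeprod P Q) A = mindep P [set x | inl x \in A] &&
     (mnullity [set y | inr y \in A] <= mlack [set x | inl x \in A]).
Proof. by []. Qed.

Lemma mnullity0 (N : matroid) : mnullity (set0 : {set mtype N}) = 0.
Proof. by rewrite /mnullity cards0. Qed.

Lemma indep_inl (A : {set mtype P}) :
  mindep (freeprod P Q) (inl @: A) = mindep P A.
Proof.
rewrite fpE.
have -> : [set x | @inl _ (mtype Q) x \in inl @: A] = A by apply/setP => x; rewrite inE sumE.
have -> : [set y | @inr (mtype P) (mtype Q) y \in inl @: A] = set0 by apply/setP => x; rewrite !inE sumE.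
by rewrite mnullity0 andbT.
Qed.

Lemma mrank_inl (A : {set mtype P}) :
  @mrank (freeprod P Q) (inl @: A) = mrank A.
Proof.
symmetry; apply: (@mrank_inj P (freeprod P Q) inl); first by move=> ? ? [].
by move=> B; rewrite indep_inl.
Qed.

Lemma indep_inr (I : {set mtype P}) (B : {set mtype Q}) :
  mrank I = mrankM P ->
  mindep (freeprod P Q) (inl @: I :|: inr @: B) = mindep P I && (mnullity B == 0).
Proof.
move=> hI; rewrite fpE.
have -> : [set x | @inl _ (mtype Q) x \in inl @: I :|: inr @: B] = I
  by apply/setP => x; rewrite !inE !sumE orbF.
have -> : [set y | @inr (mtype P) (mtype Q) y \in inl @: I :|: inr @: B] = B
  by apply/setP => x; rewrite !inE !sumE.
by rewrite /mlack hI subnn leqn0.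
Qed.

Lemma nullity0E (B : {set mtype Q}) : mindep Q set0 -> (mnullity B == 0) = mindep Q B.
Proof.
move=> h0; rewrite (indepE _ h0) /mnullity subn_eq0 eqn_leq mrank_le //.
Qed.

Hypothesis hP : mindep P set0.
Hypothesis hQ : mindep Q set0.

Lemma mrank_fp (A : {set mtype (freeprod P Q)}) :
  mrank A = minn (mrank [set x | inl x \in A] + #|[set y | inr y \in A]|)
                 (mrankM P + mrank [set y | inr y \in A]).
Proof.
set AS := [set x | inl x \in A]; set AT := [set y | inr y \in A].
apply/eqP; rewrite eqn_leq; apply/andP; split.
  apply/bigmax_leqP => I /andP[sIA]; rewrite fpE.
  set IS := [set x | inl x \in I]; set IT := [set y | inr y \in I].
  move=> /andP[iS hn].
  have c1 : #|I| = #|IS| + #|IT| := card_sumset I.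
  have sS : IS \subset AS by apply/subsetP => x; rewrite !inE => /(subsetP sIA).
  have sT : IT \subset AT by apply/subsetP => x; rewrite !inE => /(subsetP sIA).
  have h1 := mrank_ub sS iS.
  have h2 := subset_leq_card sT.
  have h3 := mrank_mono sT.
  have h4 := mrank_indep iS.
  have h5 : mrank IS <= mrankM P by apply: mrank_mono; exact: subsetT.
  have h6 := mrank_le IT.
  move: hn; rewrite /mnullity /mlack => hn.
  rewrite leq_min; apply/andP; split; lia.
have [JS [sJS iJS cJS]] := mrank_witness AS hP.
have [JT [sJT iJT cJT]] := mrank_witness AT hQ.
have hAS : mrank AS <= mrankM P by apply: mrank_mono; exact: subsetT.
have hAT := mrank_le AT.
have cD : #|AT :\: JT| = #|AT| - #|JT|.
  by rewrite cardsD (setIidPr sJT).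
have hm : minn (mrankM P - mrank AS) (#|AT| - #|JT|) <= #|AT :\: JT| by rewrite cD geq_minr.
have [L sL cL] := subset_card_exists hm.
have dL : #|JT :|: L| = #|JT| + #|L|.
  rewrite cardsU; have -> : JT :&: L = set0.
    by apply/setP => x; rewrite !inE; apply/andP => -[xJ xL]; move/subsetP: sL => /(_ x xL); rewrite !inE xJ.
  by rewrite cards0 subn0.
have sLA : L \subset AT by apply: subset_trans sL (subsetDl _ _).
pose I := inl @: JS :|: inr @: (JT :|: L).
have sI : I \subset A.
  apply/subsetP => -[x|y]; rewrite !inE !sumE /= ?orbF //.
    by move=> H; have := subsetP sJS _ H; rewrite inE.
  by rewrite inE; case/orP => H; [have := subsetP sJT _ H | have := subsetP sLA _ H]; rewrite inE.
have iI : mindep (freeprod P Q) I.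
  rewrite fpE /I.
  have -> : [set x | inl x \in I] = JS by apply/setP => x; rewrite !inE !sumE orbF.
  have -> : [set y | inr y \in I] = JT :|: L by apply/setP => x; rewrite !inE !sumE /= !inE.
  rewrite iJS /= /mnullity /mlack (mrank_indep iJS).
  have := mrank_mono (subsetUl JT L); rewrite (mrank_indep iJT).
  lia.
have hI := @mrank_ub (freeprod P Q) A I sI iI; apply: leq_trans hI.
rewrite /I card_inlU; lia.
Qed.
End FP.

Lemma mem_imset_can (T U : finType) (f : T -> U) (g : U -> T) (A : {set T}) y :
  cancel f g -> cancel g f -> (y \in f @: A) = (g y \in A).
Proof.
move=> fK gK; apply/imsetP/idP => [[x xA ->]|h]; first by rewrite fK.
by exists (g y); rewrite ?gK.
Qed.

Lemma sub_axioms (Z N : matroid) (h : mtype N -> mtype Z) (I : {set mtype Z}) :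
  injective h -> (forall x, h x \notin I) -> mindep Z I -> matroid_axioms Z ->
  (forall A, mindep N A = mindep Z (h @: A :|: I)) -> matroid_axioms N.
Proof.
move=> hinj hI iI [Z0 Zd Za] hind.
have cU : forall A : {set mtype N}, #|h @: A :|: I| = #|A| + #|I|.
  move=> A; rewrite cardsU (card_imset _ hinj).
  have -> : h @: A :&: I = set0.
    apply/setP => z; rewrite !inE; apply/andP => -[/imsetP [x _ ->]].
    by rewrite (negbTE (hI x)).
  by rewrite cards0 subn0.
split.
- by rewrite hind imset0 set0U.
- move=> A B sAB; rewrite !hind; apply: Zd.
  by apply: setSU; apply: imsetS.
- move=> A B; rewrite !hind => iA iB lt.
  have lt' : #|h @: A :|: I| < #|h @: B :|: I| by rewrite !cU ltn_add2r.
  have [z] := Za _ _ iA iB lt'.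
  rewrite !inE => /andP[zA /orP[/imsetP [y yB ez]|zI]]; last by rewrite zI orbT in zA. subst z.
  move=> iz; exists y.
    rewrite inE yB andbT; apply/negP => yA; move: zA.
    by rewrite (imset_f h yA).
  by rewrite hind imsetU1 -setUA.
Qed.

Section Iso.
Variables M N : matroid.

Lemma miso_inv (f : mtype M -> mtype N) : bijective f ->
  (forall A : {set mtype M}, mindep N (f @: A) = mindep M A) ->
  exists g : mtype N -> mtype M, [/\ cancel f g, cancel g f &
     forall B : {set mtype N}, mindep M (g @: B) = mindep N B].
Proof.
case=> g fK gK hind; exists g; split => // B.
rewrite -hind -imset_comp (eq_imset _ gK) imset_id //.
Qed.

Lemma miso_sym : miso M N -> miso N M.
Proof.
case=> f [bf hind]; have [g [fK gK hg]] := miso_inv bf hind.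
by exists g; split => //; exists f.
Qed.

Lemma miso_card : miso M N -> #|mtype M| = #|mtype N|.
Proof. by case=> f [bf _]; exact: bij_eq_card bf. Qed.

Lemma miso_rank (f : mtype M -> mtype N) : bijective f ->
  (forall A : {set mtype M}, mindep N (f @: A) = mindep M A) ->
  forall A : {set mtype M}, mrank (f @: A) = mrank A.
Proof.
move=> bf hind A; symmetry; apply: mrank_inj; first exact: bij_inj.
by move=> B; rewrite hind.
Qed.

Lemma miso_axioms : miso M N -> matroid_axioms M -> matroid_axioms N.
Proof.
case/miso_sym => g [bg hind] hM.
apply: (@sub_axioms M N g set0) => //.
- exact: bij_inj.
- by move=> x; rewrite inE.
- by case: hM.
- by move=> A; rewrite setU0 hind.
Qed.

Lemma miso_split (f : mtype M -> mtype N) : bijective f ->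
  (forall A : {set mtype M}, mindep N (f @: A) = mindep M A) ->
  forall K : {set mtype M}, msplit K -> msplit (f @: K).
Proof.
move=> bf hind K hK B.
have [g [fK gK _]] := miso_inv bf hind.
have hr := miso_rank bf hind.
have eB : B = f @: (g @: B) by rewrite -imset_comp (eq_imset _ gK) imset_id.
have e1 : B :&: f @: K = f @: ((g @: B) :&: K).
  by apply/setP => y; rewrite !inE !(mem_imset_can _ _ fK gK) !inE (mem_imset_can _ _ gK fK) gK.
have e2 : B :\: f @: K = f @: ((g @: B) :\: K).
  by apply/setP => y; rewrite !inE !(mem_imset_can _ _ fK gK) !inE (mem_imset_can _ _ gK fK) gK.
have e3 : B :|: f @: K = f @: ((g @: B) :|: K).
  by apply/setP => y; rewrite !inE !(mem_imset_can _ _ fK gK) !inE (mem_imset_can _ _ gK fK) gK.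
rewrite e1 e2 e3 !hr (card_imset _ (can_inj fK)) {1}eB hr; exact: hK.
Qed.

End Iso.

Lemma miso_trans (M N R : matroid) : miso M N -> miso N R -> miso M R.
Proof.
case=> f [bf hf] [g [bg hg]]; exists (g \o f); split; first exact: bij_comp.
by move=> A; rewrite imset_comp hg hf.
Qed.

Section FPsplit.
Variables P Q : matroid.
Hypothesis hP : mindep P set0.
Hypothesis hQ : mindep Q set0.

Definition SL := (inl @: [set: mtype P]) : {set mtype (freeprod P Q)}.

Lemma split_SL : msplit SL.
Proof.
move=> A.
have e1 : A :&: SL = inl @: [set x | inl x \in A].
  by apply/setP => -[x|y]; rewrite /SL !inE !sumE ?inE ?andbT ?andbF.
have e2 : #|A :\: SL| = #|[set y | inr y \in A]|.
  rewrite card_sumset.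
  have -> : [set x | @inl (mtype P) (mtype Q) x \in A :\: SL] = set0 by apply/setP => x; rewrite /SL !inE !sumE inE.
  have -> : [set y | @inr (mtype P) (mtype Q) y \in A :\: SL] = [set y | inr y \in A] by apply/setP => x; rewrite /SL !inE !sumE /= ?andbT.
  by rewrite cards0.
rewrite e1 e2 mrank_inl !(mrank_fp hP hQ).
have -> : [set x | @inl (mtype P) (mtype Q) x \in A :|: SL] = setT by apply/setP => x; rewrite /SL !inE !sumE inE orbT.
have -> : [set y | @inr (mtype P) (mtype Q) y \in A :|: SL] = [set y | inr y \in A] by apply/setP => x; rewrite /SL !inE !sumE orbF.
have := @mrank_le Q [set y | inr y \in A].
have : mrank [set x | inl x \in A] <= mrankM P by apply: mrank_mono; exact: subsetT.
rewrite /mrankM; lia.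
Qed.

End FPsplit.

Lemma split_inl_restrict (P Q : matroid) (K : {set mtype (freeprod P Q)}) :
  msplit K -> K \subset SL P Q -> msplit [set x | inl x \in K].
Proof.
move=> hK sK A.
set K' := [set x | inl x \in K].
have eK : K = inl @: K'.
  apply/setP => -[x|y]; rewrite ?sumE ?inE //.
  apply/negP => yK; move/subsetP: sK => /(_ _ yK).
  by rewrite /SL sumE.
have := hK (inl @: A).
rewrite eK mrank_inl.
have -> : inl @: A :&: inl @: K' = inl @: (A :&: K') :> {set mtype (freeprod P Q)}.
  by apply/setP => -[x|y]; rewrite !inE !sumE ?inE.
have -> : inl @: A :\: inl @: K' = inl @: (A :\: K') :> {set mtype (freeprod P Q)}.
  by apply/setP => -[x|y]; rewrite !inE !sumE ?inE.
have -> : inl @: A :|: inl @: K' = inl @: (A :|: K') :> {set mtype (freeprod P Q)}.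
  by apply/setP => -[x|y]; rewrite !inE !sumE ?inE.
by rewrite !mrank_inl card_imset //; move=> ? ? [].
Qed.

Lemma extend_indep (M : matroid) : matroid_axioms M ->
  forall n (A L : {set mtype M}), #|L| - #|A| = n -> mindep M A -> mindep M L -> #|A| <= #|L| ->
  exists J : {set mtype M}, [/\ A \subset J, J \subset A :|: L, mindep M J & #|J| = #|L|].
Proof.
case=> h0 hd ha; elim=> [|n IH] A L hn iA iL le.
  exists A; split => //; [exact: subsetUl | lia].
have lt : #|A| < #|L| by lia.
have [x xLA ix] := ha _ _ iA iL lt.
move: xLA; rewrite inE => /andP[xA xL].
have e1 : #|L| - #|x |: A| = n by rewrite cardsU1 xA; lia.
have e2 : #|x |: A| <= #|L| by rewrite cardsU1 xA.
have [J [s1 s2 iJ cJ]] := IH _ _ e1 ix iL e2.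
exists J; split => //.
  by apply: subset_trans s1; exact: subsetUr.
apply: subset_trans s2 _; apply/subsetP => y; rewrite !inE.
by case/orP => [/orP[/eqP ->|->]|->]; rewrite ?xL ?orbT.
Qed.

Section Decomp.
Variable P : matroid.
Hypothesis hax : matroid_axioms P.
Variable K : {set mtype P}.
Hypothesis hK : msplit K.
Variable I : {set mtype P}.
Hypothesis sIK : I \subset K.
Hypothesis iI : mindep P I.
Hypothesis cI : #|I| = mrank K.

Definition T1 := {x : mtype P | x \in K}.
Definition T2 := {x : mtype P | x \notin K}.

Definition R1 := @Matroid T1 (fun A => mindep P (val @: A)).
Definition R2 := @Matroid T2 (fun B => mindep P (val @: B :|: I)).

Lemma h0 : mindep P set0. Proof. by case: hax. Qed.
Lemma hdown : forall A B : {set mtype P}, A \subset B -> mindep P B -> mindep P A.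
Proof. by case: hax. Qed.

Lemma R1_axioms : matroid_axioms R1.
Proof.
apply: (@sub_axioms P R1 val set0) => //.
- exact: val_inj.
- by move=> x; rewrite inE.
- exact: h0.
- by move=> A; rewrite setU0.
Qed.

Lemma R2_axioms : matroid_axioms R2.
Proof.
apply: (@sub_axioms P R2 val I) => //.
- exact: val_inj.
- move=> x; apply/negP => xI; move/subsetP: sIK => /(_ _ xI).
  by rewrite (negbTE (valP x)).
Qed.

Lemma val1_setT : val @: [set: R1.(mtype)] = K.
Proof.
apply/setP => x; apply/imsetP/idP => [[y _ ->]|xK]; first exact: (valP y).
by exists (exist _ x xK).
Qed.

Lemma rank_R1 (A : {set mtype R1}) : mrank A = mrank (val @: A).
Proof. by apply: (@mrank_inj R1 P val); [exact: val_inj | ]. Qed.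

Lemma rank_R2 (B : {set mtype R2}) : mrank B + mrank K = mrank (val @: B :|: K).
Proof.
apply/eqP; rewrite eqn_leq; apply/andP; split.
  have R20 : mindep R2 set0 by case: R2_axioms.
  have [J [sJB iJ cJ]] := mrank_witness B R20.
  rewrite -cJ -cI.
  have cU : #|val @: J :|: I| = #|J| + #|I|.
    rewrite cardsU (card_imset _ val_inj).
    have -> : val @: J :&: I = set0.
      apply/setP => z; rewrite !inE; apply/andP => -[/imsetP [x _ ->] xI].
      by move/subsetP: sIK => /(_ _ xI); rewrite (negbTE (valP x)).
    by rewrite cards0 subn0.
  rewrite -cU; apply: (@mrank_ub P _ (val @: J :|: I) _ iJ).
  by apply: setUSS; [exact: imsetS | ].
have [L [sL iL cL]] := mrank_witness (val @: B :|: K) h0.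
have le : #|I| <= #|L| by rewrite cI cL; apply: mrank_mono; exact: subsetUr.
have [J [s1 s2 iJ cJ]] := extend_indep hax (erefl _) iI iL le.
have JK : forall x, x \in J -> x \in K -> x \in I.
  move=> x xJ xK; apply/negPn/negP => xI.
  have : #|x |: I| <= mrank K.
    apply: mrank_ub; last by apply: hdown iJ; rewrite subUset sub1set xJ s1.
    by rewrite subUset sub1set xK sIK.
  by rewrite cardsU1 xI -cI ltnn.
pose J2 := [set y : mtype R2 | val y \in J].
have eJ : val @: J2 :|: I = J.
  apply/setP => z; rewrite inE; apply/idP/idP.
    case/orP => [/imsetP [y]|zI]; first by rewrite inE => yJ ->.
    by move/subsetP: s1 => /(_ _ zI).
  move=> zJ; case zK: (z \in K); first by rewrite (JK _ zJ zK) orbT.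
  apply/orP; left; apply/imsetP; exists (exist _ z (negbT zK)) => //.
  by rewrite inE.
have cJ2 : #|J2| + #|I| = #|J|.
  rewrite -eJ cardsU (card_imset _ val_inj).
  have -> : val @: J2 :&: I = set0.
    apply/setP => z; rewrite !inE; apply/andP => -[/imsetP [x _ ->] xI].
    by move/subsetP: sIK => /(_ _ xI); rewrite (negbTE (valP x)).
  by rewrite cards0 subn0.
have sJ2 : J2 \subset B.
  apply/subsetP => y; rewrite inE => yJ.
  move/subsetP: s2 => /(_ _ yJ); rewrite inE => /orP[/(subsetP sIK)|/(subsetP sL)].
    by rewrite (negbTE (valP y)).
  rewrite inE (negbTE (valP y)) orbF mem_imset //; exact: val_inj.
have iJ2 : mindep R2 J2 by rewrite /= eJ.
have := mrank_ub sJ2 iJ2.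
rewrite -cL -cJ -cJ2 cI; lia.
Qed.


Definition psi (z : mtype (freeprod R1 R2)) : mtype P :=
  match z with inl x => val x | inr y => val y end.

Lemma v1K (X : {set mtype R1}) z : z \in val @: X -> z \in K.
Proof. by case/imsetP => x _ ->; exact: (valP x). Qed.
Lemma v2K (Y : {set mtype R2}) z : z \in val @: Y -> z \notin K.
Proof. by case/imsetP => x _ ->; exact: (valP x). Qed.

Lemma psi_inj : injective psi.
Proof.
move=> [x|x] [y|y] //= e.
- by congr inl; apply: val_inj.
- by move: (valP x) (valP y) => /= hx hy; rewrite -e hx in hy.
- by move: (valP x) (valP y) => /= hx hy; rewrite e hy in hx.
- by congr inr; apply: val_inj.
Qed.

Lemma psi_bij : bijective psi.
Proof.
apply: inj_card_bij; first exact: psi_inj.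
rewrite card_sum /= /T1 /T2 !card_sig -(cardsC K).
apply: eq_leq; congr (_ + _); apply: eq_card => x; by rewrite !inE.
Qed.

Lemma psi_img (A : {set mtype (freeprod R1 R2)}) :
  psi @: A = val @: [set x | inl x \in A] :|: val @: [set y | inr y \in A].
Proof.
rewrite {1}(sum_decomp A) imsetU -!imset_comp.
by congr (_ :|: _); apply: eq_imset.
Qed.

Lemma R1_0 : mindep R1 set0. Proof. by case: R1_axioms. Qed.
Lemma R2_0 : mindep R2 set0. Proof. by case: R2_axioms. Qed.

Lemma rank_psi (A : {set mtype (freeprod R1 R2)}) : mrank A = mrank (psi @: A).
Proof.
rewrite (mrank_fp R1_0 R2_0) hK psi_img.
set AS := [set x | inl x \in A]; set AT := [set y | inr y \in A].
have e1 : (val @: AS :|: val @: AT) :&: K = val @: AS.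
  apply/setP => z; rewrite !inE.
  case h1: (z \in val @: AS); first by rewrite (v1K h1).
  by case h2: (z \in val @: AT) => //=; rewrite (negbTE (v2K h2)).
have e2 : (val @: AS :|: val @: AT) :\: K = val @: AT.
  apply/setP => z; rewrite !inE.
  case h2: (z \in val @: AT); first by rewrite (v2K h2) orbT.
  rewrite orbF; case h1: (z \in val @: AS); [by rewrite (v1K h1) | by rewrite andbF].
have e3 : (val @: AS :|: val @: AT) :|: K = val @: AT :|: K.
  apply/setP => z; rewrite !inE.
  by case h1: (z \in val @: AS) => //=; rewrite (v1K h1) !orbT.
rewrite e1 e2 e3 rank_R1 (card_imset _ val_inj) -rank_R2.
have -> : mrankM R1 = mrank K by rewrite /mrankM rank_R1 val1_setT.
by rewrite [mrank K + _]addnC.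
Qed.

Lemma fp_0 : mindep (freeprod R1 R2) set0.
Proof.
rewrite fpE.
have -> : [set x | @inl (mtype R1) (mtype R2) x \in set0] = set0 by apply/setP => x; rewrite !inE.
have -> : [set y | @inr (mtype R1) (mtype R2) y \in set0] = set0 by apply/setP => x; rewrite !inE.
by rewrite R1_0 mnullity0.
Qed.

Lemma decomp_iso : miso (freeprod R1 R2) P.
Proof.
exists psi; split; first exact: psi_bij.
move=> A; rewrite (indepE _ h0) (indepE _ fp_0) -rank_psi (card_imset _ psi_inj) //.
Qed.

End Decomp.

Lemma split_trivial (P : matroid) (K : {set mtype P}) :
  irreducible P -> matroid_axioms P -> msplit K -> K = set0 \/ K = setT.
Proof.
move=> [_ irr] hax hK.
case: (eqVneq K set0) => [->|nK0]; first by left.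
case: (eqVneq K setT) => [->|nKT]; first by right.
exfalso.
have h00 : mindep P set0 by case: hax.
have [I [sI iI cI]] := mrank_witness K h00.
have c1 : 0 < #|mtype (R1 K)|.
  rewrite /= /T1 card_sig; case/set0Pn: nK0 => x xK.
  by apply/card_gt0P; exists x; rewrite inE.
have c2 : 0 < #|mtype (R2 K I)|.
  rewrite /= /T2 card_sig.
  have : ~: K != set0.
    apply: contra nKT => /eqP h; apply/eqP/setP => x; rewrite inE.
    apply/negPn/negP => xK; suff : x \in (set0 : {set mtype P}) by rewrite inE.
    by rewrite -h inE.
  case/set0Pn => x; rewrite inE => xK.
  by apply/card_gt0P; exists x; rewrite inE.
have hiso := miso_sym (decomp_iso hax hK sI iI cI).
have ax1 := R1_axioms hax K.
have ax2 := R2_axioms hax sI iI.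
have hall : forall N, List.In N [:: R1 K; R2 K I] -> matroid_axioms N by move=> N /= [<-|[<-|[]]].
have [s1 [N [s2 [es hN]]]] := irr [:: R1 K; R2 K I] hall hiso.
have cN := miso_card hN.
have cP : #|mtype P| = #|mtype (R1 K)| + #|mtype (R2 K I)|.
  by rewrite (miso_card hiso) card_sum.
case: s1 es => [|a [|b s1]] /= es.
- by case: es => eN _; subst N; lia.
- by case: es => _ eN _; subst N; lia.
- by case: es => _ _ e; case: s1 e.
Qed.

Lemma uniform_part (X : matroid) (S S' : {set mtype X}) :
  msplit S -> msplit S' -> S :&: S' = set0 -> 0 < #|S'| ->
  forall Y : {set mtype X}, Y \subset S -> mrank Y = minn #|Y| (mrank (S :|: S')).
Proof.
move=> hS hS' dS nS' Y sY.
have nd : forall x, x \in S -> x \in S' -> False.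
  move=> x xS xS'; have : x \in S :&: S' by rewrite inE xS xS'.
  by rewrite dS inE.
have e1 := hS' Y.
have E1 : Y :&: S' = set0.
  apply/setP => x; rewrite !inE; apply/negP => /andP[xY xS'].
  exact: (nd x (subsetP sY _ xY) xS').
have E2 : Y :\: S' = Y.
  apply/setP => x; rewrite !inE; case xY: (x \in Y); rewrite ?andbT ?andbF //.
  apply/negP => xS'; exact: (nd x (subsetP sY _ xY) xS').
have e2 := hS (Y :|: S').
have E3 : (Y :|: S') :&: S = Y.
  apply/setP => x; rewrite !inE; case xY: (x \in Y); first by rewrite (subsetP sY _ xY).
  rewrite /=; apply/negP => /andP[xS' xS]; exact: (nd x xS xS').
have E4 : (Y :|: S') :\: S = S'.
  apply/setP => x; rewrite !inE; case xS': (x \in S'); rewrite ?orbT ?orbF ?andbT ?andbF.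
    apply/negP => xS; exact: (nd x xS xS').
  by case xY: (x \in Y); rewrite ?andbF // (subsetP sY _ xY).
have E5 : Y :|: S' :|: S = S :|: S'.
  apply/setP => x; rewrite !inE; case xY: (x \in Y); rewrite ?(subsetP sY _ xY) //=.
  by rewrite orbC.
rewrite E1 E2 mrank0 in e1; rewrite E3 E4 E5 in e2.
have := mrank_le Y.
lia.
Qed.

Lemma uniform_irred (P : matroid) (c : nat) :
  irreducible P -> matroid_axioms P -> (forall Y : {set mtype P}, mrank Y = minn #|Y| c) ->
  forall x y : mtype P, x = y.
Proof.
move=> irr hax hr x y; apply/eqP/negPn/negP => nxy.
have hK : msplit [set x].
  move=> A; rewrite !hr.
  have := cardsID [set x] A.
  have := subset_leq_card (subsetUl A [set x]).
  lia.
case: (split_trivial irr hax hK) => /setP /(_ _).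
  by move=> /(_ x); rewrite !inE eqxx.
by move=> /(_ y); rewrite !inE eq_sym (negbTE nxy).
Qed.

Lemma SL_sub_split (P Q : matroid) (K : {set mtype (freeprod P Q)}) :
  irreducible P -> matroid_axioms P -> msplit K -> K \subset SL P Q ->
  K = set0 \/ K = SL P Q.
Proof.
move=> irr hax hK sK.
have eK : forall x, (inl x \in K) = (x \in [set x | inl x \in K]) by move=> x; rewrite inE.
have nr : forall y, (inr y \in K) = false.
  move=> y; apply/negP => yK; move/subsetP: sK => /(_ _ yK).
  by rewrite /SL sumE.
case: (split_trivial irr hax (split_inl_restrict hK sK)) => e; [left|right].
  by apply/setP => -[x|y]; rewrite ?nr ?inE // eK e inE.
by apply/setP => -[x|y]; rewrite ?nr /SL ?sumE // eK e !inE.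
Qed.

Section Transfer.
Variables P1 P2 Q1 Q2 : matroid.
Notation X := (freeprod P1 P2).
Notation Y := (freeprod Q1 Q2).
Variable phi : mtype X -> mtype Y.
Hypothesis bphi : bijective phi.
Hypothesis hphi : forall A : {set mtype X}, mindep Y (phi @: A) = mindep X A.
Hypothesis lphi : forall x, (x \in SL P1 P2) = (phi x \in SL Q1 Q2).
Hypothesis hP1 : mindep P1 set0.
Hypothesis hP2 : mindep P2 set0.
Hypothesis hQ2 : mindep Q2 set0.

Lemma transfer : miso P1 Q1 /\ miso P2 Q2.
Proof.
have [psi [pK sK hpsi]] := miso_inv bphi hphi.
have lpsi : forall y, (y \in SL Q1 Q2) = (psi y \in SL P1 P2) by move=> y; rewrite lphi sK.
have inSL : forall (T1 T2 : finType) (z : T1 + T2), (z \in inl @: [set: T1]) = (if z is inl _ then true else false).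
  by move=> T1 T2 [x|y]; rewrite sumE ?inE.
have ex1 : forall t, exists u, phi (inl t) = inl u.
  move=> t; have := lphi (inl t); rewrite /SL !inSL.
  by case: (phi (inl t)) => // u _; exists u.
have ex2 : forall t, exists u, phi (inr t) = inr u.
  move=> t; have := lphi (inr t); rewrite /SL !inSL.
  by case: (phi (inr t)) => // u _; exists u.
have ex3 : forall t, exists u, psi (inl t) = inl u.
  move=> t; have := lpsi (inl t); rewrite /SL !inSL.
  by case: (psi (inl t)) => // u _; exists u.
have ex4 : forall t, exists u, psi (inr t) = inr u.
  move=> t; have := lpsi (inr t); rewrite /SL !inSL.
  by case: (psi (inr t)) => // u _; exists u.
have [g1 hg1] := fin_all_exists ex1.
have [g2 hg2] := fin_all_exists ex2.
have [k1 hk1] := fin_all_exists ex3.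
have [k2 hk2] := fin_all_exists ex4.
have g1K : cancel g1 k1 by move=> t; apply: (@inl_inj _ (mtype P2)); rewrite -hk1 -hg1 pK.
have k1K : cancel k1 g1 by move=> t; apply: (@inl_inj _ (mtype Q2)); rewrite -hg1 -hk1 sK.
have g2K : cancel g2 k2 by move=> t; apply: (@inr_inj (mtype P1)); rewrite -hk2 -hg2 pK.
have k2K : cancel k2 g2 by move=> t; apply: (@inr_inj (mtype Q1)); rewrite -hg2 -hk2 sK.
have im1 : forall A : {set mtype P1}, inl @: (g1 @: A) = phi @: (inl @: A) :> {set mtype Y}.
  by move=> A; rewrite -!imset_comp; apply: eq_imset => t /=; rewrite hg1.
have im2 : forall B : {set mtype P2}, inr @: (g2 @: B) = phi @: (inr @: B) :> {set mtype Y}.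
  by move=> A; rewrite -!imset_comp; apply: eq_imset => t /=; rewrite hg2.
have iso1 : forall A : {set mtype P1}, mindep Q1 (g1 @: A) = mindep P1 A.
  by move=> A; rewrite -(@indep_inl Q1 Q2) im1 hphi indep_inl.
split; first by exists g1; split => //; exists k1.
exists g2; split; first by exists k2.
move=> B.
have [I [_ iI cI]] := mrank_witness [set: mtype P1] hP1.
have rI : mrank I = mrankM P1 by rewrite (mrank_indep iI).
have bg1 : bijective g1 by exists k1.
have rJ : mrank (g1 @: I) = mrankM Q1.
  rewrite (miso_rank bg1 iso1) rI /mrankM.
  have -> : [set: mtype Q1] = g1 @: [set: mtype P1].
    apply/setP => u; rewrite inE; apply/esym/imsetP; exists (k1 u); rewrite ?k1K //.
  by rewrite (miso_rank bg1 iso1).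
rewrite -(nullity0E _ hQ2) -(nullity0E _ hP2).
have := @indep_inr P1 P2 I B rI; rewrite iI andTb => <-.
have := @indep_inr Q1 Q2 (g1 @: I) (g2 @: B) rJ; rewrite iso1 iI andTb => <-.
by rewrite im1 im2 -imsetU hphi.
Qed.
End Transfer.

Section Swap.
Variable X : matroid.
Hypothesis hXd : forall A B : {set mtype X}, A \subset B -> mindep X B -> mindep X A.
Hypothesis hX0 : mindep X set0.
Variables a b : mtype X.
Hypothesis nab : a != b.
Hypothesis hS : msplit [set a].
Hypothesis hS' : msplit [set b].

Definition sw (x : mtype X) := if x == a then b else if x == b then a else x.

Lemma swK : cancel sw sw.
Proof.
move=> x; rewrite /sw; case: (eqVneq x a) => [->|xa]; first by rewrite [b == a]eq_sym (negbTE nab) eqxx.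
case: (eqVneq x b) => [->|xb]; first by rewrite eqxx.
by rewrite (negbTE xa) (negbTE xb).
Qed.

Lemma sw_rank (A : {set mtype X}) : mrank (sw @: A) = mrank A.
Proof.
have d : [set a] :&: [set b] = set0.
  by apply/setP => x; rewrite !inE; apply/negP => /andP[/eqP -> /eqP e]; move: nab; rewrite e eqxx.
have d' : [set b] :&: [set a] = set0 by rewrite setIC.
have c1 : 0 < #|[set b]| by rewrite cards1.
have c2 : 0 < #|[set a]| by rewrite cards1.
have hu1 := uniform_part hS hS' d c1.
have hu2 := uniform_part hS' hS d' c2.
rewrite setUC in hu2.
have hU := split_union hXd hS hS'.
set U := [set a] :|: [set b] in hu1 hu2 hU.
have mU : forall y, (y \in U) = (y == a) || (y == b) by move=> y; rewrite !inE.
have msw : forall (B : {set mtype X}) y, (y \in sw @: B) = (sw y \in B).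
  by move=> B y; rewrite (mem_imset_can _ _ swK swK).
have swa : sw a = b by rewrite /sw eqxx.
have swb : sw b = a by rewrite /sw eqxx eq_sym (negbTE nab).
have swo : forall y, y != a -> y != b -> sw y = y.
  by move=> y ya yb; rewrite /sw (negbTE ya) (negbTE yb).
have key : forall B : {set mtype X}, B \subset U -> mrank (sw @: B) = mrank B.
  move=> B sB.
  case aB: (a \in B); case bB: (b \in B).
  - have -> : sw @: B = B; last by [].
    apply/setP => y; rewrite msw.
    case: (eqVneq y a) => [->|ya]; first by rewrite swa aB bB.
    case: (eqVneq y b) => [->|yb]; first by rewrite swb aB bB.
    by rewrite swo.
  - have s1 : B \subset [set a].
      apply/subsetP => y yB; have := subsetP sB _ yB; rewrite mU inE.
      by case/orP => // /eqP e; rewrite e bB in yB.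
    have s2 : sw @: B \subset [set b].
      apply/subsetP => y; rewrite msw => yB; have := subsetP s1 _ yB; rewrite inE.
      by move/eqP => e; rewrite -(swK y) e swa inE.
    by rewrite (hu1 _ s1) (hu2 _ s2) (card_imset _ (can_inj swK)).
  - have s1 : B \subset [set b].
      apply/subsetP => y yB; have := subsetP sB _ yB; rewrite mU inE.
      by case/orP => // /eqP e; rewrite e aB in yB.
    have s2 : sw @: B \subset [set a].
      apply/subsetP => y; rewrite msw => yB; have := subsetP s1 _ yB; rewrite inE.
      by move/eqP => e; rewrite -(swK y) e swb inE.
    by rewrite (hu2 _ s1) (hu1 _ s2) (card_imset _ (can_inj swK)).
  - have -> : B = set0; last by rewrite imset0.
    apply/setP => y; rewrite inE; apply/negP => yB; have := subsetP sB _ yB.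
    by rewrite mU; case/orP => /eqP e; [rewrite e aB in yB | rewrite e bB in yB].
have swU : forall y, (sw y \in U) = (y \in U).
  move=> y; rewrite !mU.
  case: (eqVneq y a) => [->|ya]; first by rewrite swa eqxx orbT.
  case: (eqVneq y b) => [->|yb]; first by rewrite swb eqxx.
  by rewrite swo // (negbTE ya) (negbTE yb).
have swn : forall y, y \notin U -> sw y = y.
  move=> y; rewrite mU negb_or => /andP[ya yb]; exact: swo.
rewrite hU (hU A).
have -> : sw @: A :&: U = sw @: (A :&: U).
  by apply/setP => y; rewrite in_setI !msw in_setI swU.
have -> : sw @: A :\: U = A :\: U.
  apply/setP => y; rewrite !(in_setD _ U y) msw; case yU: (y \in U) => //=.
  by rewrite swn ?yU.
have -> : sw @: A :|: U = A :|: U.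
  apply/setP => y; rewrite !(in_setU y _ U) msw; case yU: (y \in U); rewrite ?orbT //=.
  by rewrite swn ?yU.
by rewrite key ?subsetIr.
Qed.

Lemma sw_indep (A : {set mtype X}) : mindep X (sw @: A) = mindep X A.
Proof. by rewrite !(indepE _ hX0) sw_rank (card_imset _ (can_inj swK)). Qed.

End Swap.

Lemma main_lemma (P1 P2 Q1 Q2 : matroid) :
  matroid_axioms (freeprod P1 P2) -> matroid_axioms P1 -> matroid_axioms Q1 ->
  irreducible P1 -> irreducible Q1 -> mindep P2 set0 -> mindep Q2 set0 ->
  miso (freeprod P1 P2) (freeprod Q1 Q2) -> miso P1 Q1 /\ miso P2 Q2.
Proof.
move=> hX axP1 axQ1 irP1 irQ1 P20 Q20 hiso.
have P10 : mindep P1 set0 by case: axP1.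
have Q10 : mindep Q1 set0 by case: axQ1.
have [_ hXd _] := hX.
have X0 : mindep (freeprod P1 P2) set0 by case: hX.
case: (hiso) => f [bf hf].
have [g [fK gK hg]] := miso_inv bf hf.
have bg : bijective g by exists f.
have hS := split_SL P10 P20.
have hS'' := split_SL Q10 Q20.
set S := SL P1 P2 in hS *.
set S'' := SL Q1 Q2 in hS'' *.
have hS' := miso_split bg hg hS''.
set S' := g @: S'' in hS' *.
have memS' : forall x, (x \in S') = (f x \in S'') by move=> x; rewrite (mem_imset_can _ _ gK fK).
have hK := split_inter hXd hS hS'.
set K := S :&: S' in hK.
have c1 := SL_sub_split irP1 axP1 hK (subsetIl _ _).
have hfK := miso_split bf hf hK.
have sfK : f @: K \subset S''.
  apply/subsetP => y; rewrite (mem_imset_can _ _ fK gK) inE memS' gK.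
  by case/andP.
have c2 := SL_sub_split irQ1 axQ1 hfK sfK.
have [t0 _] : exists t0 : mtype P1, t0 \in [set: mtype P1].
  by apply/card_gt0P; rewrite cardsT; case: irP1.
have [u0 _] : exists u0 : mtype Q1, u0 \in [set: mtype Q1].
  by apply/card_gt0P; rewrite cardsT; case: irQ1.
have t0S : inl t0 \in S by rewrite /S /SL sumE inE.
have u0S : inl u0 \in S'' by rewrite /S'' /SL sumE inE.
case: c1 => eK.
-
  have eK2 : f @: K = set0 by rewrite eK imset0.
  have dS : S :&: S' = set0 by [].
  have nS' : 0 < #|S'|.
    by apply/card_gt0P; exists (g (inl u0)); rewrite memS' gK.
  have nS : 0 < #|S| by apply/card_gt0P; exists (inl t0).
  have hu1 := uniform_part hS hS' dS nS'.
  have dS2 : S' :&: S = set0 by rewrite setIC.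
  have hu2 := uniform_part hS' hS dS2 nS.
  rewrite setUC in hu2.
  have sub1 : forall x y : mtype P1, x = y.
    apply: (uniform_irred irP1 axP1 (c := mrank (S :|: S'))) => Y.
    rewrite -(mrank_inl P2 Y) hu1; last by apply: imsetS; exact: subsetT.
    by rewrite card_imset //; move=> ? ? [].
  have hrg := miso_rank bg hg.
  have sub2 : forall x y : mtype Q1, x = y.
    apply: (uniform_irred irQ1 axQ1 (c := mrank (S :|: S'))) => Y.
    rewrite -(mrank_inl Q2 Y) -hrg hu2; last by apply: imsetS; apply: imsetS; exact: subsetT.
    by rewrite (card_imset _ (can_inj gK)) card_imset //; move=> ? ? [].
  set a : mtype (freeprod P1 P2) := inl t0.
  set b := g (inl u0).
  have eS : S = [set a].
    apply/setP => -[x|y]; rewrite /S /SL !inE sumE ?inE; last by [].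
    by rewrite (sub1 x t0) eqxx.
  have eS' : S' = [set b].
    apply/setP => x; rewrite memS' inE.
    apply/idP/idP => [|/eqP ->]; last by rewrite /b gK.
    rewrite -(inj_eq (can_inj fK)) /b gK.
    rewrite /S'' /SL; case: (f x) => [u|v]; rewrite sumE ?inE //.
    by rewrite (sub2 u u0) eqxx.
  have nab : a != b.
    apply/negP => /eqP e.
    have : a \in S :&: S' by rewrite eS eS' !inE e !eqxx.
    by rewrite dS inE.
  rewrite eS in hS; rewrite eS' in hS'.
  pose phi := f \o sw a b.
  have swK' := swK nab.
  apply: (@transfer P1 P2 Q1 Q2 phi) => //.
  + exact: bij_comp bf (Bijective swK' swK').
  + by move=> A; rewrite /phi imset_comp hf (sw_indep hXd X0 nab hS hS').
  + move=> x; rewrite /phi /= -/S -/S'' -memS' eS eS' !inE /sw.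
    case xa: (x == a); first by rewrite eqxx.
    case xb: (x == b); first by rewrite (negbTE nab).
    by rewrite xb.
-
  case: c2 => eK2.
    by move: eK2; rewrite eK => /setP /(_ (f (inl t0))); rewrite (mem_imset _ _ (bij_inj bf)) t0S inE.
  apply: (@transfer P1 P2 Q1 Q2 f) => //.
  by move=> x; rewrite -eK2 eK (mem_imset _ _ (bij_inj bf)).
Qed.

Lemma miso_refl (M : matroid) : miso M M.
Proof.
exists id; split; first by exists id.
by move=> A; rewrite imset_id.
Qed.

Lemma fp_set0 (P Q : matroid) : mindep P set0 -> mindep (freeprod P Q) set0.
Proof.
move=> h; rewrite fpE.
have -> : [set x | @inl (mtype P) (mtype Q) x \in set0] = set0 by apply/setP => x; rewrite !inE.
have -> : [set y | @inr (mtype P) (mtype Q) y \in set0] = set0 by apply/setP => x; rewrite !inE.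
by rewrite h mnullity0.
Qed.

Lemma bigfp0 (s : seq matroid) : (forall N, List.In N s -> mindep N set0) -> mindep (bigfp s) set0.
Proof.
elim: s => [|M [|N s] IH] h //=.
- by apply: h; left.
- apply: fp_set0; by apply: h; left.
Qed.

Lemma card_bigfp (s : seq matroid) : #|mtype (bigfp s)| = sumn [seq #|mtype N| | N <- s].
Proof.
elim: s => [|M [|N s] IH] /=.
- by rewrite card_void.
- by rewrite addn0.
- by rewrite card_sum IH.
Qed.

Lemma fp_right_axioms (P Q : matroid) :
  matroid_axioms (freeprod P Q) -> mindep P set0 -> mindep Q set0 -> matroid_axioms Q.
Proof.
move=> hX hP hQ.
have [I [_ iI cI]] := mrank_witness [set: mtype P] hP.
have rI : mrank I = mrankM P by rewrite (mrank_indep iI).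
apply: (@sub_axioms (freeprod P Q) Q inr (inl @: I)) => //.
- by move=> ? ? [].
- by move=> x; rewrite sumE.
- by rewrite indep_inl.
- by move=> B; rewrite setUC indep_inr // iI (nullity0E _ hQ).
Qed.

Definition allirr (s : seq matroid) :=
  forall N, List.In N s -> matroid_axioms N /\ irreducible N.

Lemma pos_in (s : seq matroid) N : allirr s -> List.In N s -> 0 < #|mtype N|.
Proof. by move=> h /h [_ [p _]]. Qed.

Lemma single_many (M1 : matroid) (ns : seq matroid) :
  irreducible M1 -> allirr ns -> miso M1 (bigfp ns) -> 1 < size ns -> False.
Proof.
move=> [_ irr] hns hiso sz.
have hall : forall N, List.In N ns -> matroid_axioms N by move=> N /hns [].
have [s1 [N [s2 [es hN]]]] := irr ns hall hiso.
have c1 := miso_card hiso.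
have c2 := miso_card hN.
rewrite card_bigfp es map_cat sumn_cat /= in c1.
have inN : forall N', List.In N' (s1 ++ N :: s2) -> 0 < #|mtype N'| by rewrite -es => N'; exact: pos_in hns.
case: s1 es inN c1 => [|N1 s1] es inN c1.
- case: s2 es inN c1 => [|N2 s2] es inN c1; first by rewrite es in sz.
  have := inN N2 (or_intror (or_introl erefl)).
  rewrite /= c2 in c1; move: c1.
  have e : forall x y z : nat, x = 0 + (x + (y + z)) -> 0 < y -> False by move=> *; lia.
  exact: e.
- have := inN N1 (or_introl erefl).
  rewrite /= c2 in c1; move: c1.
  have e : forall x y z w : nat, x = y + z + (x + w) -> 0 < y -> False by move=> *; lia.
  exact: e.
Qed.

Lemma nonempty_bigfp (N : matroid) (ns : seq matroid) : allirr (N :: ns) -> 0 < #|mtype (bigfp (N :: ns))|.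
Proof.
move=> h; rewrite card_bigfp /=.
exact: leq_trans (pos_in h (or_introl erefl)) (leq_addr _ _).
Qed.

Lemma main_ind (ms : seq matroid) : forall (ns : seq matroid) (M : matroid),
  matroid_axioms M -> allirr ms -> allirr ns ->
  miso M (bigfp ms) -> miso M (bigfp ns) ->
  size ms = size ns /\
  forall i, i < size ms -> miso (nth empty_matroid ms i) (nth empty_matroid ns i).
Proof.
elim: ms => [|M1 ms IH] ns M hM hms hns hm hn.
  case: ns hns hn => [|N ns] hns hn; first by split.
  have := nonempty_bigfp hns.
  by rewrite -(miso_card hn) (miso_card hm) card_bigfp.
have [axM1 irM1] := hms M1 (or_introl erefl).
have hms' : allirr ms by move=> N hN; apply: hms; right.
case: ns hns hn => [|N1 ns] hns hn.
  have := nonempty_bigfp hms.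
  by rewrite -(miso_card hm) (miso_card hn) card_bigfp.
have [axN1 irN1] := hns N1 (or_introl erefl).
have hns' : allirr ns by move=> N hN; apply: hns; right.
case: ms IH hms hms' hm => [|M2 ms] IH hms hms' hm.
  case: ns hns hns' hn => [|N2 ns] hns hns' hn.
    split => // -[|i] //= _.
    exact: miso_trans (miso_sym hm) hn.
  exfalso; apply: (single_many irM1 hns _ isT).
  exact: miso_trans (miso_sym hm) hn.
case: ns hns hns' hn => [|N2 ns] hns hns' hn.
  exfalso; apply: (single_many irN1 hms _ isT).
  exact: miso_trans (miso_sym hn) hm.
have hXY := miso_trans (miso_sym hm) hn.
have hX := miso_axioms hm hM.
have P20 : mindep (bigfp (M2 :: ms)) set0.
  by apply: bigfp0 => N /hms' [[h _] _].
have Q20 : mindep (bigfp (N2 :: ns)) set0.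
  by apply: bigfp0 => N /hns' [[h _] _].
have [i1 i2] := main_lemma hX axM1 axN1 irM1 irN1 P20 Q20 hXY.
have P10 : mindep M1 set0 by case: axM1.
have axP2 := fp_right_axioms hX P10 P20.
have [e1 e2] := IH (N2 :: ns) _ axP2 hms' hns' (miso_refl _) i2.
split; first by move: e1 => /= ->.
by move=> [|i] //= lt; apply: e2.
Qed.

Unset Implicit Arguments.

Theorem theorem6p17 (M : matroid) (ms ns : seq matroid) :
  matroid_axioms M ->
  (forall Mi, List.In Mi ms -> matroid_axioms Mi /\ irreducible Mi) ->
  (forall Nj, List.In Nj ns -> matroid_axioms Nj /\ irreducible Nj) ->
  miso M (bigfp ms) ->
  miso M (bigfp ns) ->
  size ms = size ns /\
  forall i, i < size ms -> miso (nth empty_matroid ms i) (nth empty_matroid ns i).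
Proof.
move=> hM hms hns hm hn.
exact: (@main_ind ms ns M hM hms hns hm hn).
Qed.
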